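(* Fix a classifier $f_\theta$, a sequence of queueing systems and a sequence of feasible policies, and suppose Assumptions (DGP), (HT) and (UI) hold. Then for every predicted class $l\in[K]$, as $n\to\infty$, \[ \tilde L_l^n\to\tilde L_l:=\tilde R_l\circ\lambda e+\sum_{k=1}^K\frac{p_k}{\mu_k}q_{kl}\tilde A_0,\qquad \tilde L_+^n\to\tilde L_+:=\tilde V_0\circ\lambda e+\sum_{k=1}^K\frac{p_k}{\mu_k}\tilde A_0, \] uniformly on $[0,1]$, where $e$ is the identity on $[0,1]$. Moreover, for every $n$ and $t\in[0,1]$, \[ \hat L_l^n(nt)=\lambda^n\sum_{k=1}^K\frac{p_k^n}{\mu_k^n}q_{kl}^n\,nt+n^{1/2}\tilde L_l^n(t)+o(n^{1/2}),\qquad \hat L_+^n(nt)=\lambda^n\sum_{k=1}^K\frac{p_k^n}{\mu_k^n}\,nt+n^{1/2}\tilde L_+^n(t)+o(n^{1/2}). \]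
   Context: Model. For each $n$, system $n$ operates on $[0,n]$; jobs $i=1,2,\dots$ arrive in a single stream with interarrival times $u_i^n$, features $X_i^n\in\mathbb R^d$, one-hot true class $Y_i^n\in\{0,1\}^K$, service requirement $v_i^n>0$, and one-hot predicted class $\hat Y_i^n=f_\theta(X_i^n)$. Let $\lambda^n=1/E[u_1^n]$, $p_k^n=P(Y_{1k}^n=1)$, $1/\mu_k^n=E[v_1^n\mid Y_{1k}^n=1]$, $q_{kl}^n=P(\hat Y_{1l}^n=1\mid Y_{1k}^n=1)$, $A_0^n(t)=\max\{m:\sum_{i\le m}u_i^n\le t\}$. Assumption (DGP): for each $n$, $\{(u_i^n,v_i^n,X_i^n,Y_i^n)\}_i$ i.i.d.; $\{u_i^n\}$ independent of $\{(v_i^n,X_i^n,Y_i^n)\}$; $v_i^n\perp X_i^n\mid Y_i^n$. Assumption (HT): there exist $p_k,q_{kl}\in[0,1]$, positive $\lambda,\mu_k$ with $\sum_kp_kq_{kl}>0$ for all $l$, $\lambda\sum_kp_k/\mu_k=1$, and $n^{1/2}(\lambda^n-\lambda),n^{1/2}(\mu_k^n-\mu_k),n^{1/2}(p_k^n-p_k),n^{1/2}(q_{kl}^n-q_{kl})\to0$. Assumption (UI): $E[(u_1^n)^2],E[(v_1^n)^2],E[(X_1^n)^2]<\infty$; $E[(u_1^n)^2\mathbf 1\{u_1^n>x\}]\le g_u(x)$, $E[(v_1^n)^2\mathbf 1\{v_1^n>x\}]\le g_v(x)$ with fixed $g_u,g_v\to0$; $E[(u_1^n)^2]\to\alpha_u\in(0,\infty)$,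 $E[(v_1^n)^2\mid Y_{1k}^n=1]\to\alpha_{v,k}\in(0,\infty)$. Primitive diffusion-scaled processes on $[0,1]$: $\tilde A_0^n(t)=n^{-1/2}[A_0^n(nt)-\lambda^nnt]$; $\tilde V_0^n(t)=n^{-1/2}[\sum_{i\le\lfloor nt\rfloor}v_i^n-\sum_k\frac{p_k^n}{\mu_k^n}nt]$; $\tilde R_l^n(t)=n^{-1/2}[\sum_{i\le\lfloor nt\rfloor}\hat Y_{il}^nv_i^n-\sum_k\frac{p_k^n}{\mu_k^n}q_{kl}^nnt]$. These are realized on a common probability space (distributions preserved) on which they converge uniformly on $[0,1]$ almost surely to limits $\tilde A_0,\tilde V_0,\tilde R_l$ (jointly a multidimensional Brownian motion); all statements hold almost surely there. Input processes: $\hat L_l^n(t)=\sum_{i=1}^{A_0^n(t)}\hat Y_{il}^nv_i^n$ (total service requested by jobs predicted as $l$ arriving by $t$), $\hat L_+^n=\sum_l\hat L_l^n$, $\tilde L_l^n(t)=n^{-1/2}[\hat L_l^n(nt)-\lambda^n\sum_k\frac{p_k^n}{\mu_k^n}q_{kl}^nnt]$, $\tilde L_+^n=\sum_l\tilde L_l^n$. A feasible policy is a non-anticipating rule choosing which predicted class to serve (preemption allowed). $o(n^{1/2})$ denotes terms whose sup over $t\in[0,1]$ divided by $n^{1/2}$ tends to $0$. *)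

(* Defs.v *)
From Stdlib Require Import Reals Lra Lia Arith ZArith.
Open Scope R_scope.

(* sumR K f = f 0 + ... + f (K-1)  (sum over classes k in [K] = {0,..,K-1}) *)
Fixpoint sumR (K : nat) (f : nat -> R) : R :=
  match K with O => 0 | S k => sumR k f + f k end.

(* psum f m = f 1 + ... + f m  (jobs are numbered 1,2,...) *)
Fixpoint psum (f : nat -> R) (m : nat) : R :=
  match m with O => 0 | S m' => psum f m' + f (S m') end.

Definition nfloor (x : R) : nat := Z.to_nat (Int_part x).

(* one-hot predicted class: Yhat_{il} = 1{predicted class of job i = l} *)
Definition onehot (c l : nat) : R := if Nat.eqb c l then 1 else 0.

Definition is_count_max (u : nat -> R) (t : R) (a : nat) : Prop :=
  psum u a <= t /\ (forall m, psum u m <= t -> (m <= a)%nat).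

Definition unif_cv_on (T : R) (F : nat -> R -> R) (G : R -> R) : Prop :=
  forall eps, eps > 0 -> exists N : nat, forall n : nat, (n >= N)%nat ->
    forall t, 0 <= t <= T -> Rabs (F n t - G t) < eps.

Definition cont_nonneg (f : R -> R) : Prop :=
  forall t, 0 <= t -> forall eps, eps > 0 -> exists delta, delta > 0 /\
    forall s, 0 <= s -> Rabs (s - t) < delta -> Rabs (f s - f t) < eps.

Definition little_o_sqrt (err : nat -> R -> R) : Prop :=
  forall eps, eps > 0 -> exists N : nat, forall n : nat, (n >= N)%nat ->
    forall t, 0 <= t <= 1 -> Rabs (err n t) <= eps * sqrt (INR n).

Section Processes.
Variables (K : nat) (u v : nat -> nat -> R) (pc : nat -> nat -> nat)
  (A0 : nat -> R -> nat) (lam : nat -> R) (p mu : nat -> nat -> R)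
  (q : nat -> nat -> nat -> R).

Definition rho (n : nat) : R := sumR K (fun k => p n k / mu n k).
Definition rhol (n l : nat) : R := sumR K (fun k => p n k / mu n k * q n k l).

Definition tA0 (n : nat) (t : R) : R :=
  (INR (A0 n (INR n * t)) - lam n * (INR n * t)) / sqrt (INR n).
Definition tV0 (n : nat) (t : R) : R :=
  (psum (v n) (nfloor (INR n * t)) - rho n * (INR n * t)) / sqrt (INR n).
Definition tR (n l : nat) (t : R) : R :=
  (psum (fun i => onehot (pc n i) l * v n i) (nfloor (INR n * t))
     - rhol n l * (INR n * t)) / sqrt (INR n).

Definition Lhat (n l : nat) (s : R) : R :=
  psum (fun i => onehot (pc n i) l * v n i) (A0 n s).
Definition Lhatplus (n : nat) (s : R) : R := sumR K (fun l => Lhat n l s).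
Definition tL (n l : nat) (t : R) : R :=
  (Lhat n l (INR n * t) - lam n * rhol n l * (INR n * t)) / sqrt (INR n).
Definition tLplus (n : nat) (t : R) : R := sumR K (fun l => tL n l t).
End Processes.

(* Main.v *)
Require Import Defs.
From Stdlib Require Import Reals Lra Lia ZArith.
Open Scope R_scope.

Lemma nfloor_INR m : nfloor (INR m) = m.
Proof. unfold nfloor. rewrite Int_part_INR. apply Nat2Z.id. Qed.

Lemma sqrt_ge1 n : (1 <= n)%nat -> 1 <= sqrt (INR n).
Proof. intro H. rewrite <- sqrt_1. apply sqrt_le_1_alt. apply le_INR in H. simpl in H. lra. Qed.

Lemma cv_HT x xn : Un_cv (fun n => sqrt (INR n) * (xn n - x)) 0 -> Un_cv xn x.
Proof.
  intros H e He. destruct (H e He) as [N HN]. exists (S N). intros n Hn.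
  specialize (HN n ltac:(lia)). unfold Rdist in *. rewrite Rminus_0_r, Rabs_mult in HN.
  assert (1 <= sqrt (INR n)) by (apply sqrt_ge1; lia).
  rewrite (Rabs_right (sqrt _)) in HN by lra.
  assert (0 <= Rabs (xn n - x)) by apply Rabs_pos. nra.
Qed.

Lemma cv_inv xn x : x <> 0 -> Un_cv xn x -> Un_cv (fun n => / xn n) (/ x).
Proof.
  intros Hx H. apply (continuity_seq Rinv xn x); auto.
  change (continuity_pt (/ id) x). apply continuity_pt_inv; auto.
  apply derivable_continuous_pt, derivable_pt_id.
Qed.

Lemma sumR_cv K (f : nat -> nat -> R) (g : nat -> R) :
  (forall k, (k < K)%nat -> Un_cv (fun n => f n k) (g k)) ->
  Un_cv (fun n => sumR K (f n)) (sumR K g).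
Proof.
  induction K as [|K IH]; intros H; simpl.
  - intros e He. exists O. intros. unfold Rdist. rewrite Rminus_0_r, Rabs_R0. lra.
  - apply CV_plus; [apply IH; intros; apply H; lia | apply H; lia].
Qed.

Lemma sumR_ext K f g : (forall l, (l < K)%nat -> f l = g l) -> sumR K f = sumR K g.
Proof. induction K; intros H; simpl; auto. rewrite IHK by (intros; apply H; lia). rewrite H by lia. auto. Qed.

Lemma sumR_plus K f g : sumR K (fun l => f l + g l) = sumR K f + sumR K g.
Proof. induction K; simpl; [lra|rewrite IHK; lra]. Qed.

Lemma sumR_scal K a f : sumR K (fun l => a * f l) = a * sumR K f.
Proof. induction K; simpl; [lra|rewrite IHK; lra]. Qed.

Lemma sumR_swap K M (F : nat -> nat -> R) :
  sumR K (fun l => sumR M (fun k => F k l)) = sumR M (fun k => sumR K (fun l => F k l)).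
Proof.
  induction K; simpl.
  - induction M; simpl; [lra| rewrite <- IHM; lra].
  - rewrite IHK, <- sumR_plus. auto.
Qed.

Lemma sumR_psum K (F : nat -> nat -> R) m :
  sumR K (fun l => psum (F l) m) = psum (fun i => sumR K (fun l => F l i)) m.
Proof.
  induction m; simpl.
  - induction K; simpl; [lra| rewrite IHK; lra].
  - rewrite sumR_plus, IHm. auto.
Qed.

Lemma sumR_zero K f : (forall l, (l < K)%nat -> f l = 0) -> sumR K f = 0.
Proof. induction K; intros H; simpl; auto. rewrite IHK; [rewrite H by lia; lra|]. intros; apply H; lia. Qed.

Lemma sumR_onehot K c : (c < K)%nat -> sumR K (fun l => onehot c l) = 1.
Proof.
  induction K; intros H; [lia|]. simpl.
  destruct (Nat.eq_dec c K).
  - subst. rewrite sumR_zero. unfold onehot. rewrite Nat.eqb_refl. lra.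
    intros l Hl. unfold onehot. destruct (Nat.eqb_spec K l); [lia|auto].
  - rewrite IHK by lia. unfold onehot. destruct (Nat.eqb_spec c K); [lia|lra].
Qed.

Lemma sumR_div K f s : sumR K (fun l => f l / s) = sumR K f / s.
Proof. induction K; simpl; unfold Rdiv in *; [lra| rewrite IHK; lra]. Qed.

Lemma cont_ext f : cont_nonneg f -> forall x, 0 <= x -> continuity_pt (fun s => f (Rmax 0 s)) x.
Proof.
  intros Hf x Hx. unfold continuity_pt, continue_in, limit1_in, limit_in.
  intros eps He. destruct (Hf x Hx eps He) as [d [Hd H]]. exists d. split; auto.
  intros y [_ Hy]. simpl in *. unfold Rdist in *. rewrite (Rmax_right 0 x) by lra.
  apply H. apply Rmax_l.
  unfold Rmax; destruct (Rle_dec 0 y); auto.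
  revert Hy. unfold Rabs; repeat destruct Rcase_abs; lra.
Qed.

Lemma unif_cont f T : cont_nonneg f -> 0 <= T -> forall eps, eps > 0 -> exists d, d > 0 /\
  forall x y, 0 <= x <= T -> 0 <= y <= T -> Rabs (x - y) < d -> Rabs (f x - f y) < eps.
Proof.
  intros Hf HT eps He.
  assert (U := Heine (fun s => f (Rmax 0 s)) (fun c => 0 <= c <= T) (compact_P3 0 T)
    (fun x Hx => cont_ext f Hf x (proj1 Hx))).
  destruct (U (mkposreal eps He)) as [[d Hd] Hu]. exists d. split; auto.
  intros x y Hx Hy Hxy. specialize (Hu x y Hx Hy Hxy). simpl in Hu.
  rewrite (Rmax_right 0 x), (Rmax_right 0 y) in Hu by lra. auto.
Qed.

Lemma bounded01 f : cont_nonneg f -> exists M, forall t, 0 <= t <= 1 -> Rabs (f t) <= M.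
Proof.
  intros Hf.
  destruct (continuity_ab_maj (fun s => Rabs (f (Rmax 0 s))) 0 1) as [Mx [HM _]].
  - lra.
  - intros c Hc. apply (continuity_pt_comp (fun s => f (Rmax 0 s)) Rabs).
    + apply cont_ext; tauto.
    + apply Rcontinuity_abs.
  - exists (Rabs (f (Rmax 0 Mx))). intros t Ht. specialize (HM t Ht).
    simpl in HM. rewrite (Rmax_right 0 t) in HM by lra. auto.
Qed.

Lemma ev_sqrt X : exists N : nat, forall n, (n >= N)%nat -> X < sqrt (INR n).
Proof.
  destruct (INR_unbounded (Rmax 0 X * Rmax 0 X)) as [N HN]. exists N. intros n Hn.
  apply le_INR in Hn.
  assert (0 <= Rmax 0 X) by apply Rmax_l.
  assert (X <= Rmax 0 X) by apply Rmax_r.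
  assert (Rmax 0 X = sqrt (Rmax 0 X * Rmax 0 X)) by (rewrite sqrt_square; auto).
  assert (sqrt (Rmax 0 X * Rmax 0 X) < sqrt (INR n)).
  { apply sqrt_lt_1_alt. split; [nra|lra]. }
  lra.
Qed.

Lemma gen (A0 : nat -> R -> nat) (lam_n : nat -> R) (lam : R) (A0L : R -> R)
  (w : nat -> nat -> R) (c_n : nat -> R) (c : R) (W : R -> R) :
  0 < lam -> Un_cv lam_n lam -> Un_cv c_n c -> cont_nonneg A0L -> cont_nonneg W ->
  unif_cv_on 1 (tA0 A0 lam_n) A0L ->
  (forall T, 0 <= T -> unif_cv_on T (fun n t =>
      (psum (w n) (nfloor (INR n * t)) - c_n n * (INR n * t)) / sqrt (INR n)) W) ->
  unif_cv_on 1 (fun n t => (psum (w n) (A0 n (INR n * t)) - lam_n n * c_n n * (INR n * t))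
      / sqrt (INR n)) (fun t => W (lam * t) + c * A0L t).
Proof.
  intros Hlam Hln Hcn HcA HcW HA HW eps He.
  destruct (bounded01 A0L HcA) as [M HM].
  assert (HM0 : 0 <= M) by (specialize (HM 0 ltac:(lra)); pose proof (Rabs_pos (A0L 0)); lra).
  set (T := lam + 1).
  destruct (unif_cont W T HcW ltac:(unfold T; lra) (eps/3) ltac:(lra)) as [d [Hd HWc]].
  set (eps1 := Rmin 1 (eps / 6 / (Rabs c + 1))).
  assert (Hc0 : 0 <= Rabs c) by apply Rabs_pos.
  assert (He1 : eps1 > 0).
  { unfold eps1. apply Rmin_glb_lt; [lra|]. apply Rdiv_lt_0_compat; lra. }
  destruct (HA eps1 He1) as [N1 HN1].
  destruct (HW T ltac:(unfold T; lra) (eps/3) ltac:(lra)) as [N2 HN2].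
  destruct (Hcn (eps / 6 / (M + 1))) as [N3 HN3].
  { apply Rdiv_lt_0_compat; lra. }
  set (e4 := Rmin d 1 / 2).
  assert (He4 : e4 > 0) by (unfold e4; assert (0 < Rmin d 1) by (apply Rmin_glb_lt; lra); lra).
  assert (He4' : e4 * 2 <= d /\ e4 * 2 <= 1).
  { unfold e4. split; [pose proof (Rmin_l d 1)|pose proof (Rmin_r d 1)]; lra. }
  destruct (Hln e4 He4) as [N4 HN4].
  destruct (ev_sqrt ((M + 1) / e4)) as [N5 HN5].
  exists (S (N1 + N2 + N3 + N4 + N5)). intros n Hn t Ht.
  specialize (HN1 n ltac:(lia) t Ht). specialize (HN3 n ltac:(lia)).
  specialize (HN4 n ltac:(lia)). specialize (HN5 n ltac:(lia)).
  unfold Rdist in HN3, HN4.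
  assert (Hs1 : 1 <= sqrt (INR n)) by (apply sqrt_ge1; lia).
  set (s := sqrt (INR n)) in *.
  assert (Hss : s * s = INR n) by (apply sqrt_sqrt, pos_INR).
  set (a := INR (A0 n (INR n * t))).
  assert (Ha : 0 <= a) by apply pos_INR.
  set (X := tA0 A0 lam_n n t) in *.
  assert (HX : X * s = a - lam_n n * (INR n * t)).
  { unfold X, tA0. fold s a. field. lra. }
  set (abar := a / INR n).
  assert (Hnab : INR n * abar = a) by (unfold abar; field; nra).
  assert (Hab : abar - lam_n n * t = X / s).
  { unfold abar. replace a with (X * s + lam_n n * (INR n * t)) by lra.
    rewrite <- Hss. field. lra. }
  assert (HXb : Rabs X <= M + 1).
  { specialize (HM t Ht). unfold eps1 in HN1. pose proof (Rmin_l 1 (eps / 6 / (Rabs c + 1))).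
    revert HN1 HM. split_Rabs; lra. }
  assert (HXs : Rabs (X / s) < e4).
  { unfold Rdiv. rewrite Rabs_mult, Rabs_inv, (Rabs_right s) by lra.
    apply (Rmult_lt_reg_r s); [lra|]. rewrite Rmult_assoc, Rinv_l by lra.
    assert ((M + 1) / e4 * e4 = M + 1) by (field; lra).
    assert (e4 * ((M + 1) / e4) < e4 * s) by (apply Rmult_lt_compat_l; lra). lra. }
  assert (Hdist : Rabs (abar - lam * t) < e4 * 2).
  { assert (Rabs ((lam_n n - lam) * t) <= Rabs (lam_n n - lam)).
    { rewrite Rabs_mult, (Rabs_right t) by lra.
      pose proof (Rabs_pos (lam_n n - lam)). nra. }
    revert Hab HXs HN4 H. split_Rabs; nra. }
  assert (Habr : 0 <= abar <= T).
  { split. unfold abar. apply Rmult_le_pos; auto. left; apply Rinv_0_lt_compat, lt_0_INR; lia.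
    unfold T. revert Hdist. split_Rabs; nra. }
  specialize (HN2 n ltac:(lia) abar Habr).
  assert (Hw : Rabs (W abar - W (lam * t)) < eps / 3).
  { apply HWc; auto. unfold T; split; nra. lra. }
  simpl in HN2. fold s in HN2. rewrite Hnab in HN2. unfold a in HN2. rewrite nfloor_INR in HN2. fold a in HN2. fold a s.
  assert (Hid : (psum (w n) (A0 n (INR n * t)) - lam_n n * c_n n * (INR n * t)) / s
     = (psum (w n) (A0 n (INR n * t)) - c_n n * a) / s + c_n n * X).
  { replace a with (X * s + lam_n n * (INR n * t)) by lra. field. lra. }
  rewrite Hid.
  assert (H3 : Rabs (c_n n * X - c * A0L t) <= eps / 3).
  { replace (c_n n * X - c * A0L t) with ((c_n n - c) * X + c * (X - A0L t)) by ring.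
    eapply Rle_trans; [apply Rabs_triang|]. rewrite !Rabs_mult.
    assert (Rabs (c_n n - c) * Rabs X <= eps / 6 / (M + 1) * (M + 1)).
    { apply Rmult_le_compat; try apply Rabs_pos; lra. }
    assert (Rabs c * Rabs (X - A0L t) <= Rabs c * (eps / 6 / (Rabs c + 1))).
    { apply Rmult_le_compat_l; auto. assert (Hm := Rmin_r 1 (eps / 6 / (Rabs c + 1))).
      fold eps1 in Hm. revert HN1 Hm. split_Rabs; lra. }
    assert (Rabs c * (eps / 6 / (Rabs c + 1)) <= eps / 6).
    { apply (Rmult_le_reg_r (Rabs c + 1)); [lra|]. field_simplify; [|lra]. nra. }
    assert (eps / 6 / (M + 1) * (M + 1) = eps / 6) by (field; lra).
    lra. }
  revert HN2 Hw H3.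
  generalize ((psum (w n) (A0 n (INR n * t)) - c_n n * a) / s) (c_n n * X) (c * A0L t) (W abar) (W (lam * t)).
  intros. split_Rabs; lra.
Qed.

Lemma sumR_minus K f g : sumR K (fun l => f l - g l) = sumR K f - sumR K g.
Proof. induction K; simpl; [lra|rewrite IHK; lra]. Qed.
Lemma sumR_scal2 K a b f : sumR K (fun l => a * f l * b) = a * sumR K f * b.
Proof. induction K; simpl; [lra|rewrite IHK; lra]. Qed.
Lemma sumR_scalr K b f : sumR K (fun l => f l * b) = sumR K f * b.
Proof. induction K; simpl; [lra|rewrite IHK; lra]. Qed.
Lemma psum_ext f g m : (forall i, f i = g i) -> psum f m = psum g m.
Proof. intros H; induction m; simpl; auto. rewrite IHm, H; auto. Qed.
Lemma unif_ext T F F' G : unif_cv_on T F G -> (forall n t, F' n t = F n t) -> unif_cv_on T F' G.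
Proof. intros H E eps He. destruct (H eps He) as [N HN]. exists N. intros. rewrite E. auto. Qed.

Theorem mainTheorem5
  (K : nat)
  (* system n, jobs i = 1,2,...: interarrival u n i, service v n i,
     predicted class pc n i (the one-hot Yhat is onehot (pc n i)) *)
  (u v : nat -> nat -> R) (pc : nat -> nat -> nat)
  (A0 : nat -> R -> nat)
  (* model parameters of system n and their heavy-traffic limits *)
  (lam_n : nat -> R) (p_n mu_n : nat -> nat -> R) (q_n : nat -> nat -> nat -> R)
  (lam : R) (p mu : nat -> R) (q : nat -> nat -> R)
  (* limits of the primitive diffusion-scaled processes (one sample path) *)
  (A0L V0L : R -> R) (RL : nat -> R -> R)
  (* basic model facts *)
  (Hu : forall n i, 0 <= u n i)
  (Hv : forall n i, 0 < v n i)
  (Hpc : forall n i, (pc n i < K)%nat)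
  (HA0 : forall n s, 0 <= s -> is_count_max (u n) s (A0 n s))
  (Hlamn : forall n, 0 < lam_n n)
  (Hmun : forall n k, (k < K)%nat -> 0 < mu_n n k)
  (Hpn : forall n k, (k < K)%nat -> 0 <= p_n n k <= 1)
  (Hqn : forall n k l, (k < K)%nat -> (l < K)%nat -> 0 <= q_n n k l <= 1)
  (Hqsum : forall n k, (k < K)%nat -> sumR K (fun l => q_n n k l) = 1)
  (* Assumption (HT) *)
  (Hlam : 0 < lam)
  (Hmu : forall k, (k < K)%nat -> 0 < mu k)
  (Hp : forall k, (k < K)%nat -> 0 <= p k <= 1)
  (Hq : forall k l, (k < K)%nat -> (l < K)%nat -> 0 <= q k l <= 1)
  (Hpq : forall l, (l < K)%nat -> 0 < sumR K (fun k => p k * q k l))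
  (Hload : lam * sumR K (fun k => p k / mu k) = 1)
  (HTlam : Un_cv (fun n => sqrt (INR n) * (lam_n n - lam)) 0)
  (HTmu : forall k, (k < K)%nat -> Un_cv (fun n => sqrt (INR n) * (mu_n n k - mu k)) 0)
  (HTp : forall k, (k < K)%nat -> Un_cv (fun n => sqrt (INR n) * (p_n n k - p k)) 0)
  (HTq : forall k l, (k < K)%nat -> (l < K)%nat ->
           Un_cv (fun n => sqrt (INR n) * (q_n n k l - q k l)) 0)
  (* the limits have continuous paths (they are Brownian paths) *)
  (HcA : cont_nonneg A0L) (HcV : cont_nonneg V0L)
  (HcR : forall l, (l < K)%nat -> cont_nonneg (RL l))
  (* uniform convergence of the primitives (on compacts) *)
  (HcvA : forall T, 0 <= T -> unif_cv_on T (tA0 A0 lam_n) A0L)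
  (HcvV : forall T, 0 <= T -> unif_cv_on T (tV0 K v p_n mu_n) V0L)
  (HcvR : forall l, (l < K)%nat -> forall T, 0 <= T ->
            unif_cv_on T (fun n => tR K v pc p_n mu_n q_n n l) (RL l)) :
  (forall l, (l < K)%nat ->
     unif_cv_on 1 (fun n => tL K v pc A0 lam_n p_n mu_n q_n n l)
       (fun t => RL l (lam * t) + sumR K (fun k => p k / mu k * q k l) * A0L t))
  /\ unif_cv_on 1 (tLplus K v pc A0 lam_n p_n mu_n q_n)
       (fun t => V0L (lam * t) + sumR K (fun k => p k / mu k) * A0L t)
  /\ (forall l, (l < K)%nat -> exists err : nat -> R -> R, little_o_sqrt err /\
       forall n t, (1 <= n)%nat -> 0 <= t <= 1 ->
         Lhat v pc A0 n l (INR n * t)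
         = lam_n n * sumR K (fun k => p_n n k / mu_n n k * q_n n k l) * (INR n * t)
           + sqrt (INR n) * tL K v pc A0 lam_n p_n mu_n q_n n l t + err n t)
  /\ (exists err : nat -> R -> R, little_o_sqrt err /\
       forall n t, (1 <= n)%nat -> 0 <= t <= 1 ->
         Lhatplus K v pc A0 n (INR n * t)
         = lam_n n * sumR K (fun k => p_n n k / mu_n n k) * (INR n * t)
           + sqrt (INR n) * tLplus K v pc A0 lam_n p_n mu_n q_n n t + err n t).
Proof.
  assert (Hlcv : Un_cv lam_n lam) by (apply cv_HT; auto).
  assert (Hrhol : forall l, (l < K)%nat -> Un_cv (fun n => rhol K p_n mu_n q_n n l)
            (sumR K (fun k => p k / mu k * q k l))).
  { intros l Hl. unfold rhol. apply (sumR_cv K (fun n k => p_n n k / mu_n n k * q_n n k l)).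
    intros k Hk. apply CV_mult; [apply CV_mult|].
    - apply cv_HT; auto.
    - apply cv_inv; [specialize (Hmu k Hk); lra| apply cv_HT; auto].
    - apply cv_HT; auto. }
  assert (Hrho : Un_cv (fun n => rho K p_n mu_n n) (sumR K (fun k => p k / mu k))).
  { unfold rho. apply (sumR_cv K (fun n k => p_n n k / mu_n n k)).
    intros k Hk. apply CV_mult.
    - apply cv_HT; auto.
    - apply cv_inv; [specialize (Hmu k Hk); lra| apply cv_HT; auto]. }
  assert (Hsumrhol : forall n, sumR K (fun l => rhol K p_n mu_n q_n n l) = rho K p_n mu_n n).
  { intro n. unfold rhol, rho.
    rewrite (sumR_swap K K (fun k l => p_n n k / mu_n n k * q_n n k l)).
    apply sumR_ext. intros k Hk. rewrite sumR_scal, Hqsum by auto. ring. }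
  assert (HLsum : forall n t, tLplus K v pc A0 lam_n p_n mu_n q_n n t =
     (psum (v n) (A0 n (INR n * t)) - lam_n n * rho K p_n mu_n n * (INR n * t)) / sqrt (INR n)).
  { intros n t. unfold tLplus, tL. rewrite sumR_div, sumR_minus, sumR_scal2, Hsumrhol.
    f_equal. f_equal. unfold Lhat. rewrite sumR_psum. apply psum_ext. intro i.
    rewrite sumR_scalr, sumR_onehot by auto. ring. }
  split; [|split; [|split]].
  - intros l Hl.
    exact (gen A0 lam_n lam A0L (fun n i => onehot (pc n i) l * v n i)
             (fun n => rhol K p_n mu_n q_n n l) _ (RL l) Hlam Hlcv (Hrhol l Hl) HcA (HcR l Hl)
             (HcvA 1 ltac:(lra)) (HcvR l Hl)).
  - eapply unif_ext; [|exact HLsum].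
    exact (gen A0 lam_n lam A0L v (rho K p_n mu_n) _ V0L Hlam Hlcv Hrho HcA HcV
             (HcvA 1 ltac:(lra)) HcvV).
  - intros l Hl. exists (fun _ _ => 0). split.
    + intros eps He. exists O. intros. rewrite Rabs_R0.
      apply Rmult_le_pos; [lra| apply sqrt_pos].
    + intros n t Hn Ht. assert (1 <= sqrt (INR n)) by (apply sqrt_ge1; lia).
      unfold tL. fold (rhol K p_n mu_n q_n n l). field. lra.
  - exists (fun _ _ => 0). split.
    + intros eps He. exists O. intros. rewrite Rabs_R0.
      apply Rmult_le_pos; [lra| apply sqrt_pos].
    + intros n t Hn Ht. assert (1 <= sqrt (INR n)) by (apply sqrt_ge1; lia).
      rewrite HLsum. unfold Lhatplus. fold (rho K p_n mu_n n).
      replace (sumR K (fun l => Lhat v pc A0 n l (INR n * t))) with (psum (v n) (A0 n (INR n * t))).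
      * field. lra.
      * unfold Lhat. rewrite sumR_psum. apply psum_ext. intro i.
        rewrite sumR_scalr, sumR_onehot by auto. ring.
Qed.
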